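(* Let $\mathbb{F}$ be a field of characteristic $p$, let $\mathbb{E}$ be an extension field and let $M\le\mathbb{E}^*$ be a subgroup of order $m=r^e$ with $r$ prime and $e\ge1$. Then there is no polynomial $f\in\mathbb{F}[x]$ such that $M$ is an automatically non-standard $f$-subgroup. In particular, there is no enumeration $s_0,\ldots,s_{m-1}$ of $M$ for which $\phi_{p,m}(x)$ divides $s_0x^{m-1}+s_1x^{m-2}+\cdots+s_{m-1}$.
   Context: $\phi_{p,m}$ is the $m$th cyclotomic polynomial reduced mod $p$ (if $p>0$); when $\gcd(m,p)=1$ its zeros are the primitive $m$th roots of unity. An $f$-sequence is a two-way infinite sequence with $f(\sigma)s=0$, $(\sigma s)_n=s_{n+1}$. For $m>1$ with $\gcd(m,p)=1$ if $p>0$: if $f$ divides $(x^m-1)/((x-1)\phi_{p,m}(x))$ and an $f$-sequence $s$ of period $m$ (over an extension of $\mathbb{F}$) has $M=\{s_0,\ldots,s_{m-1}\}$ a subgroup of size $m$, then $M$ is called an automatically non-standard $f$-subgroup. *)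

(* Defs.v *)
From HB Require Import structures.
From mathcomp Require Import all_boot all_order all_algebra all_field.
Set Implicit Arguments. Unset Strict Implicit. Unset Printing Implicit Defensive.
Import Order.TTheory GRing.Theory Num.Theory.
Local Open Scope ring_scope.

Definition is_char (F : fieldType) (p : nat) : Prop :=
  forall q : nat, (q%:R == 0 :> F) = (p %| q)%N.

(* phi_{p,m}: the m-th (integral) cyclotomic polynomial reduced into the
   ring R (whose characteristic is p, so this is the reduction mod p). *)
Definition phi_pm (R : nzRingType) (m : nat) : {poly R} :=
  map_poly (fun z : int => z%:~R) 'Phi_m.

Definition units_subgroup (E : fieldType) (M : seq E) : Prop :=
  [/\ uniq M, 1 \in M,
      (forall x, x \in M -> x != 0),
      (forall x y, x \in M -> y \in M -> x * y \in M) &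
      (forall x, x \in M -> x^-1 \in M)].

(* s is an f-sequence (f(sigma) s = 0, (sigma s)_n = s_{n+1}), coefficients of
   f being transported into E along emb. *)
Definition f_sequence (F E : fieldType) (emb : {rmorphism F -> E})
  (f : {poly F}) (s : int -> E) : Prop :=
  forall n : int, \sum_(i < size f) emb f`_i * s (n + i%:Z) = 0.

Definition has_period (E : Type) (s : int -> E) (m : nat) : Prop :=
  forall n : int, s (n + m%:Z) = s n.

Definition auto_nonstandard (F E : fieldType) (emb : {rmorphism F -> E})
  (p : nat) (f : {poly F}) (M : seq E) : Prop :=
  let m := size M in
  [/\ (1 < m)%N,
      (0 < p)%N -> coprime m p,
      f %| ('X^m - 1) %/ (('X - 1) * phi_pm F m),
      units_subgroup M &
      exists s : int -> E,
        [/\ f_sequence emb f s, has_period s m &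
            perm_eq [seq s (i%:Z) | i <- iota 0 m] M]].

(* Main.v *)
Require Import Defs.
From HB Require Import structures.
From mathcomp Require Import all_boot all_order all_algebra all_field.
From mathcomp Require Import zify ring.
From mathcomp Require Import zify ring.
Import Order.TTheory GRing.Theory Num.Theory.
Local Open Scope ring_scope.

Lemma cyc_split (r e : nat) : prime r -> (0 < e)%N ->
  ('X^(r^e) - 1 : {poly int}) = ('X^(r^e.-1) - 1) * 'Phi_(r^e).
Proof.
move=> pr e0.
have r1 := prime_gt1 pr.
have m0 : (0 < r^e)%N by rewrite expn_gt0 prime_gt0.
have k0 : (0 < r^e.-1)%N by rewrite expn_gt0 prime_gt0.
have km : (r^e.-1 %| r^e)%N by apply: dvdn_exp2l; apply: leq_pred.
have klt : (r^e.-1 < r^e)%N by rewrite ltn_exp2l // prednK.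
rewrite -(prod_Cyclotomic m0) -(prod_Cyclotomic k0).
rewrite (bigID (fun d => d %| r^e.-1)%N) /=; congr (_ * _).
  rewrite -big_filter; apply: perm_big; apply: uniq_perm.
  - by rewrite filter_uniq // divisors_uniq.
  - by rewrite divisors_uniq.
  move=> d; rewrite mem_filter -!dvdn_divisors //.
  by apply/andb_idr => H; exact: (dvdn_trans H km).
rewrite big_seq_cond (eq_bigl (fun d => d == r^e)%N).
  rewrite -big_filter filter_pred1_uniq ?divisors_uniq ?big_seq1 //.
  by rewrite -dvdn_divisors.
move=> d /=; rewrite -dvdn_divisors //.
case: eqP => [->|ne].
  rewrite dvdnn /=; apply/negP => /dvdn_leq => /(_ k0); by rewrite leqNgt klt.
apply/negbTE; apply/nandP; case: (boolP (d %| r^e)%N) => [/(dvdn_pfactor _ _ pr) [j je dj]|]; last by left.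
right; rewrite negbK dj; apply: dvdn_exp2l.
have : j != e by apply/eqP => E; apply: ne; rewrite dj E.
by move=> jne; rewrite -ltnS prednK // ltn_neqAle je andbT.
Qed.

Lemma cyc_splitR (R : nzRingType) (r e : nat) : prime r -> (0 < e)%N ->
  ('X^(r^e) - 1 : {poly R}) = ('X^(r^e.-1) - 1) * phi_pm R (r^e).
Proof.
move=> pr e0; have := congr1 (map_poly (fun z : int => z%:~R : R)) (@cyc_split r e pr e0).
by rewrite rmorphM !rmorphB /= !map_polyXn !rmorph1 => ->; rewrite /phi_pm.
Qed.

Section Seq.
Variables (F E : fieldType) (emb : {rmorphism F -> E}) (s : int -> E).

Definition LL (P : {poly F}) N n := \sum_(i < N) emb P`_i * s (n + i%:Z).

Lemma LL_widen (P : {poly F}) N n : (size P <= N)%N -> LL P N n = LL P (size P) n.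
Proof.
move=> H; rewrite /LL [RHS](big_ord_widen _ (fun i : nat => emb P`_i * s (n + i%:Z)) H).
rewrite [RHS]big_mkcond; apply: eq_bigr => i _; case: ifP => // /negbT.
by rewrite -leqNgt => Hi; rewrite nth_default // rmorph0 mul0r.
Qed.

Definition annih (P : {poly F}) := forall N n, (size P <= N)%N -> LL P N n = 0.

Lemma annihE (P : {poly F}) : f_sequence emb P s -> annih P.
Proof. by move=> H N n HN; rewrite LL_widen //; apply: H. Qed.

Lemma annih_add (P Q : {poly F}) : annih P -> annih Q -> annih (P + Q).
Proof.
move=> HP HQ N n HN.
have HN' : (size (P + Q)%R <= maxn (size P) (size Q))%N by apply: size_polyD.
rewrite LL_widen // -(LL_widen _ _ _ HN').
rewrite /LL (eq_bigr (fun i : 'I_ _ => emb P`_i * s (n + i%:Z) + emb Q`_i * s (n + i%:Z))).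
  by rewrite big_split /= -!/(LL _ _ _) HP ?HQ ?addr0 // ?leq_maxl ?leq_maxr.
by move=> i _; rewrite coefD rmorphD mulrDl.
Qed.

Lemma annih_scale c (P : {poly F}) : annih P -> annih (c *: P).
Proof.
move=> HP N n HN.
rewrite LL_widen // -(LL_widen _ _ _ (size_scale_leq c P)).
rewrite /LL (eq_bigr (fun i : 'I_ _ => emb c * (emb P`_i * s (n + i%:Z)))).
  by rewrite -mulr_sumr -/(LL _ _ _) HP ?mulr0.
by move=> i _; rewrite coefZ rmorphM mulrA.
Qed.

Lemma annih_mulX (P : {poly F}) : annih P -> annih (P * 'X).
Proof.
move=> HP N n HN.
have HN' : (size (P * 'X)%R <= (size P).+1)%N.
  by apply: leq_trans (size_polyMleq _ _) _; rewrite size_polyX addn2.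
rewrite LL_widen // -(LL_widen _ _ _ HN') /LL big_ord_recl /= coefMX /= rmorph0 mul0r add0r.
rewrite -[RHS](HP (size P) (n + 1)) //; apply: eq_bigr => i _.
rewrite coefMX /=; congr (_ * s _).
by rewrite /bump /= add1n -addrA -add1n PoszD.
Qed.

Lemma annih_mul (P Q : {poly F}) : annih P -> annih (Q * P).
Proof.
move=> HP; elim/poly_ind: Q => [|Q c IH]; first by rewrite mul0r => N n _; rewrite /LL big1 // => i _; rewrite coef0 rmorph0 mul0r.
rewrite mulrDl -mulrA (mulrC 'X) mulrA mul_polyC.
by apply: annih_add; [apply: annih_mulX | apply: annih_scale].
Qed.
End Seq.

Lemma geo (R : comNzRingType) k : ('X^k - 1 : {poly R}) = ('X - 1) * \poly_(i < k) 1.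
Proof.
rewrite poly_def; elim: k => [|k IH]; first by rewrite big_ord0 expr0 subrr mulr0.
rewrite big_ord_recr /= mulrDr -IH scale1r exprS; ring.
Qed.

Theorem mainTheorem9 (F E : fieldType) (emb : {rmorphism F -> E}) (p : nat)
  (M : seq E) (r e : nat) :
  is_char F p ->
  units_subgroup M ->
  prime r -> (0 < e)%N -> size M = (r ^ e)%N ->
  (~ exists f : {poly F}, auto_nonstandard emb p f M) /\
  (forall t : seq E, perm_eq t M ->
     ~ (phi_pm E (size M) %|
          \sum_(i < size M) t`_i *: 'X^((size M).-1 - i))).
Proof.
move=> _ HM pr e0 Hsz.
have r1 := prime_gt1 pr.
have m0 : (0 < r^e)%N by rewrite expn_gt0 prime_gt0.
have k0 : (0 < r^e.-1)%N by rewrite expn_gt0 prime_gt0.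
have klt : (r^e.-1 < r^e)%N by rewrite ltn_exp2l // prednK.
have Muniq : uniq M by case: HM.
rewrite /auto_nonstandard Hsz.
set m := (r ^ e)%N; set k := (r ^ e.-1)%N.
split.
  case=> f [_ _ Hdiv _ [s [Hfs _ Hperm]]].
  set h : {poly F} := \poly_(i < k) 1.
  have Hid : ('X^m - 1 : {poly F}) = h * (('X - 1) * phi_pm F m).
    by rewrite cyc_splitR // geo -/k -/h mulrA (mulrC h).
  have Hnz : (('X - 1) * phi_pm F m) != 0.
    apply/negP => /eqP H0; move: Hid; rewrite H0 mulr0 => /(congr1 (size : {poly F} -> nat)).
    by rewrite size_Xn_sub_1 // size_poly0.
  move: Hdiv; rewrite Hid mulpK // => /dvdpP [g Hg].
  have Ha : @annih _ _ emb s h by rewrite Hg; apply: annih_mul; apply: annihE.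
  have Hs : forall n, \sum_(i < k) s (n + i%:Z) = 0.
    move=> n; rewrite -[RHS](Ha k n (size_poly _ _)) /LL; apply: eq_bigr => i _.
    by rewrite coef_poly ltn_ord rmorph1 mul1r.
  have Hsk : s 0 = s k%:Z.
    have E1 : \sum_(i < k.+1) s (i%:Z) = s 0 + \sum_(i < k) s (1 + i%:Z).
      rewrite big_ord_recl; congr (_ + _); apply: eq_bigr => i _.
    have E2 : \sum_(i < k.+1) s (i%:Z) = \sum_(i < k) s (0 + i%:Z) + s k%:Z.
      by rewrite big_ord_recr /=; congr (_ + _); apply: eq_bigr => i _; rewrite add0r.
    by move: E1; rewrite E2 Hs Hs addr0 add0r.
  have U : uniq [seq s (i%:Z) | i <- iota 0 m] by rewrite (perm_uniq Hperm).
  have := nth_uniq 0 _ _ U; rewrite size_map size_iota => /(_ 0%N k m0 klt).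
  rewrite (nth_map 0%N) ?size_iota // (nth_map 0%N) ?size_iota // !nth_iota //.
  by rewrite add0n Hsk eqxx eq_sym => /esym /eqP kz; move: k0; rewrite -/k kz.
move=> t Ht /dvdpP [q Hq].
have Hst : size t = m by rewrite (perm_size Ht) Hsz.
set phi := phi_pm E m in Hq.
have Hid : ('X^m - 1 : {poly E}) = ('X^k - 1) * phi by rewrite cyc_splitR.
have phinz : phi != 0.
  apply/negP => /eqP H0; move: Hid; rewrite H0 mulr0 => /(congr1 (size : {poly E} -> nat)).
  by rewrite size_Xn_sub_1 // size_poly0.
have Hsphi : (size phi + k = m.+1)%N.
  have := congr1 (size : {poly E} -> nat) Hid.
  rewrite size_Xn_sub_1 // size_mul ?size_Xn_sub_1 //; last first.
    by rewrite -size_poly_eq0 size_Xn_sub_1.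
  by move=> ->; rewrite addSn /= addnC.
set g := \sum_(i < m) t`_i *: 'X^(m.-1 - i) in Hq.
have Hg : g = \poly_(i < m) t`_(m.-1 - i).
  rewrite poly_def /g (reindex_inj rev_ord_inj) /=; apply: eq_bigr => i _.
  have Hi := ltn_ord i.
  by congr (t`_ _ *: 'X^ _); lia.
have Hsq : (size q <= k)%N.
  have : (size g <= m)%N by rewrite Hg size_poly.
  have [->|qnz] := eqVneq q 0; first by rewrite size_poly0.
  rewrite Hq size_mul // => H; have H2 : (size q + size phi <= m.+1)%N by apply: leq_trans (leqSpred _) _; rewrite ltnS.
  by rewrite -(leq_add2r (size phi)) (addnC k) Hsphi.
have Heq : g * ('X^k - 1) = q * ('X^m - 1) by rewrite Hq Hid -mulrA (mulrC phi).
have := congr1 (fun P : {poly E} => P`_k) Heq.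
rewrite /= !mulrBr !mulr1 !coefB !coefMXn ltnn klt subnn.
rewrite [q`_k]nth_default // subr0 Hg !coef_poly m0 klt => /eqP.
rewrite subr_eq0 => /eqP Heq2.
have Tu : uniq t by rewrite (perm_uniq Ht).
have := nth_uniq 0 _ _ Tu; rewrite Hst.
have h1 : (m.-1 < m)%N by rewrite prednK.
have h2 : (m.-1 - k < m)%N by apply: leq_ltn_trans (leq_subr _ _) h1.
rewrite subn0 in Heq2; move=> /(_ _ _ h1 h2); rewrite Heq2 eqxx => /esym /eqP H.
have hm : (0 < m.-1)%N by rewrite -ltnS prednK //; apply: leq_ltn_trans k0 klt.
by have := ltn_subrL k m.-1; rewrite -H ltnn hm andbT => /esym; rewrite -/k k0.
Qed.
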